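(* Let $T>0$, $\lambda>0$, let $\theta:[0,T]\to(0,\infty)$ be continuous, $g_t=\sqrt{2\lambda^2\theta_t}$, $\bar\theta_T=\int_0^T\theta_zdz$, $\gamma\in(0,\infty)$, and $x_0,x_T\in\mathbb{R}^d$. Consider the problem of minimizing $\int_0^T\frac12\|\mathbf{u}_t\|_2^2dt+\frac\gamma2\|\mathbf{x}^u_T-x_T\|_2^2$ over controls $\mathbf{u}:[0,T]\to\mathbb{R}^d$, subject to $\frac{d\mathbf{x}_t}{dt}=\theta_t(x_T-\mathbf{x}_t)+g_t\mathbf{u}_t$, $\mathbf{x}^u_0=x_0$. Then the terminal state $\mathbf{x}^u_T$ of the optimally controlled trajectory satisfies $$\|\mathbf{x}^u_T-x_T\|_2^2=\frac{e^{-2\bar\theta_T}}{\big(1+\gamma\lambda^2(1-e^{-2\bar\theta_T})\big)^2}\,\|x_T-x_0\|_2^2 .$$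
   Context: This is the optimal control problem associated with the generalized Ornstein–Uhlenbeck process $d\mathbf{x}_t=\theta_t(\boldsymbol{\mu}-\mathbf{x}_t)dt+g_td\mathbf{w}_t$ with mean $\boldsymbol{\mu}=x_T$ and $g_t^2=2\lambda^2\theta_t$. *)

(* Defs.v *)
From Stdlib Require Import Reals List.
From Coquelicot Require Import Coquelicot.
Open Scope R_scope.

(* Vectors of R^d are represented as functions nat -> R; only the
   coordinates 0 .. d-1 are meaningful. *)
Definition vec := nat -> R.

Definition sqnorm (d : nat) (v : vec) : R :=
  fold_right Rplus 0 (map (fun i => v i ^ 2) (seq 0 d)).

Definition vsub (v w : vec) : vec := fun i => v i - w i.

Definition cont_on (f : R -> R) (a b : R) : Prop :=
  forall t, a <= t <= b ->
    filterlim f (within (fun s => a <= s <= b) (locally t)) (locally (f t)).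

Definition admissible (d : nat) (T : R) (u : R -> vec) : Prop :=
  forall i, (i < d)%nat -> cont_on (fun t => u t i) 0 T.

Definition gfun (lam : R) (theta : R -> R) (t : R) : R :=
  sqrt (2 * lam ^ 2 * theta t).

Definition is_state (d : nat) (T lam : R) (theta : R -> R) (x0 xT : vec)
  (u : R -> vec) (x : R -> vec) : Prop :=
  forall i, (i < d)%nat ->
    x 0 i = x0 i /\
    cont_on (fun t => x t i) 0 T /\
    (forall t, 0 < t < T ->
       is_derive (fun s => x s i) t
         (theta t * (xT i - x t i) + gfun lam theta t * u t i)).

Definition cost (d : nat) (T gam : R) (xT : vec) (u : R -> vec) (x : R -> vec) : R :=
  RInt (fun t => / 2 * sqnorm d (u t)) 0 T + gam / 2 * sqnorm d (vsub (x T) xT).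

Definition optimal (d : nat) (T lam gam : R) (theta : R -> R) (x0 xT : vec)
  (u : R -> vec) (x : R -> vec) : Prop :=
  admissible d T u /\ is_state d T lam theta x0 xT u x /\
  forall v y, admissible d T v -> is_state d T lam theta x0 xT v y ->
    cost d T gam xT u x <= cost d T gam xT v y.

(* Main.v *)
Require Import Defs.
From Stdlib Require Import Reals List Lra Lia.
From Coquelicot Require Import Coquelicot.
Open Scope R_scope.
Definition clamp (T t : R) := Rmax 0 (Rmin T t).

Lemma clamp_in T t : 0 <= T -> 0 <= clamp T t <= T.
Proof. intros; unfold clamp, Rmax, Rmin; repeat destruct Rle_dec; lra. Qed.

Lemma clamp_id T t : 0 <= t <= T -> clamp T t = t.
Proof. intros; unfold clamp, Rmax, Rmin; repeat destruct Rle_dec; lra. Qed.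

Lemma clamp_lip T x y : 0 <= T -> Rabs (clamp T x - clamp T y) <= Rabs (x - y).
Proof. intros; unfold clamp, Rmax, Rmin; repeat destruct Rle_dec; unfold Rabs; repeat destruct Rcase_abs; lra. Qed.

Lemma cont_clamp (f : R -> R) (T t : R) : 0 <= T -> cont_on f 0 T -> continuous (fun s => f (clamp T s)) t.
Proof.
  intros HT Hf. unfold continuous.
  eapply filterlim_comp with (G := within (fun s => 0 <= s <= T) (locally (clamp T t))).
  - intros P [eps HP]. exists eps. intros y Hy. apply HP.
    + unfold ball in *; simpl in *; unfold AbsRing_ball, abs, minus, plus, opp in *; simpl in *.
      eapply Rle_lt_trans; [apply clamp_lip; lra| exact Hy].
    + apply clamp_in; lra.
  - apply Hf. apply clamp_in; lra.
Qed.

Lemma cont_within (f : R -> R) (a b t : R) : continuous f t -> filterlim f (within (fun s => a <= s <= b) (locally t)) (locally (f t)).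
Proof. intros H. eapply filterlim_filter_le_1; [apply filter_le_within| exact H]. Qed.

Lemma cmul (f g : R -> R) (x : R) : continuous f x -> continuous g x -> continuous (fun y => f y * g y) x.
Proof. intros; exact (continuous_mult f g x H H0). Qed.
Lemma cplus (f g : R -> R) (x : R) : continuous f x -> continuous g x -> continuous (fun y => f y + g y) x.
Proof. intros; exact (continuous_plus f g x H H0). Qed.
Lemma cminus (f g : R -> R) (x : R) : continuous f x -> continuous g x -> continuous (fun y => f y - g y) x.
Proof. intros; exact (continuous_minus f g x H H0). Qed.
Lemma cconst (c x : R) : continuous (fun _ : R => c) x.
Proof. apply continuous_const. Qed.
Lemma cexp (f : R -> R) (x : R) : continuous f x -> continuous (fun y => exp (f y)) x.
Proof. intros. apply (continuous_comp f exp). auto. apply continuity_pt_filterlim. apply derivable_continuous_pt. apply derivable_pt_exp. Qed.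
Lemma csqrt (f : R -> R) (x : R) : continuous f x -> 0 <= f x -> continuous (fun y => sqrt (f y)) x.
Proof. intros. apply (continuous_comp f sqrt). auto. apply continuity_pt_filterlim. apply continuity_pt_sqrt; auto. Qed.

Lemma RInt_deriv (f : R -> R) (t : R) : (forall s, continuous f s) -> is_derive (fun b => RInt f 0 b) t (f t).
Proof.
  intros Hf. apply (is_derive_RInt f (fun b => RInt f 0 b) 0); [|apply Hf].
  apply filter_forall. intros b. apply (RInt_correct f 0 b). apply ex_RInt_continuous. intros; apply Hf.
Qed.

Lemma ex_RInt_c (f : R -> R) (a b : R) : (forall s, continuous f s) -> ex_RInt f a b.
Proof. intros; apply (ex_RInt_continuous (V:=R_CompleteNormedModule)); intros; auto. Qed.

Lemma is_RInt_sum (l : list nat) (f : nat -> R -> R) a b :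
  (forall i, In i l -> ex_RInt (f i) a b) ->
  is_RInt (fun t => fold_right Rplus 0 (map (fun i => f i t) l)) a b
    (fold_right Rplus 0 (map (fun i => RInt (f i) a b) l)).
Proof.
  induction l as [|j l IH]; intros H; simpl.
  - assert (H0 := is_RInt_const (V:=R_NormedModule) a b 0).
    replace (scal (b - a) (0:R_NormedModule)) with 0 in H0 by (unfold scal; simpl; unfold mult; simpl; ring).
    exact H0.
  - apply (is_RInt_plus (V:=R_NormedModule) (f j) _ a b).
    + apply (RInt_correct (V:=R_CompleteNormedModule)), H; simpl; auto.
    + apply IH; intros; apply H; simpl; auto.
Qed.

Definition tht T (theta : R -> R) t := theta (clamp T t).
Definition Th T theta t := RInt (tht T theta) 0 t.
Definition gt T lam theta t := sqrt (2 * lam ^ 2 * tht T theta t).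
Definition kf T lam theta t := exp (Th T theta t - Th T theta T) * gt T lam theta t.

Lemma tht_cont T theta t : 0 <= T -> cont_on theta 0 T -> continuous (tht T theta) t.
Proof. intros; apply cont_clamp; auto. Qed.
Lemma tht_pos T theta t : 0 <= T -> (forall t, 0 <= t <= T -> 0 < theta t) -> 0 < tht T theta t.
Proof. intros; apply H0, clamp_in; auto. Qed.
Lemma Th_der T theta t : 0 <= T -> cont_on theta 0 T -> is_derive (Th T theta) t (tht T theta t).
Proof. intros; apply RInt_deriv; intros; apply tht_cont; auto. Qed.
Lemma Th_cont T theta t : 0 <= T -> cont_on theta 0 T -> continuous (Th T theta) t.
Proof. intros. apply (ex_derive_continuous (K:=R_AbsRing) (V:=R_NormedModule)). eexists; apply Th_der; auto. Qed.
Lemma Th0 T theta : Th T theta 0 = 0.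
Proof. unfold Th. rewrite RInt_point. reflexivity. Qed.

Lemma gt_cont T lam theta t : 0 <= T -> cont_on theta 0 T -> (forall t, 0 <= t <= T -> 0 < theta t) -> continuous (gt T lam theta) t.
Proof.
  intros. unfold gt. apply (csqrt (fun t => 2 * lam ^ 2 * tht T theta t)).
  apply cmul. apply cconst. apply tht_cont; auto.
  assert (0 < tht T theta t) by (apply tht_pos; auto). assert (0 <= lam ^ 2) by (apply pow2_ge_0). nra.
Qed.

Lemma kf_cont T lam theta t : 0 <= T -> cont_on theta 0 T -> (forall t, 0 <= t <= T -> 0 < theta t) -> continuous (kf T lam theta) t.
Proof.
  intros. unfold kf. apply cmul. apply (cexp (fun t => Th T theta t - Th T theta T)).
  apply cminus. apply Th_cont; auto. apply cconst. apply gt_cont; auto.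
Qed.

Lemma kf_sq T lam theta t : 0 <= T -> (forall t, 0 <= t <= T -> 0 < theta t) ->
  kf T lam theta t ^ 2 = lam ^ 2 * (2 * tht T theta t * exp (2 * (Th T theta t - Th T theta T))).
Proof.
  intros. unfold kf, gt.
  assert (0 < tht T theta t) by (apply tht_pos; auto). assert (0 <= lam ^ 2) by (apply pow2_ge_0).
  set (a := Th T theta t - Th T theta T). set (b := 2 * lam ^ 2 * tht T theta t).
  replace ((exp a * sqrt b) ^ 2) with ((exp a * exp a) * (sqrt b * sqrt b)) by ring.
  rewrite sqrt_sqrt by (unfold b; nra). rewrite <- exp_plus.
  replace (a + a) with (2 * a) by ring. unfold b. ring.
Qed.

Lemma K_val T lam theta : 0 < T -> cont_on theta 0 T -> (forall t, 0 <= t <= T -> 0 < theta t) ->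
  RInt (fun s => kf T lam theta s ^ 2) 0 T = lam ^ 2 * (1 - exp (-2 * Th T theta T)).
Proof.
  intros HT Hc Hp.
  apply is_RInt_unique.
  assert (HH : is_RInt (fun s => kf T lam theta s ^ 2) 0 T
     (minus ((fun s => lam ^ 2 * exp (2 * (Th T theta s - Th T theta T))) T)
            ((fun s => lam ^ 2 * exp (2 * (Th T theta s - Th T theta T))) 0))).
  { apply (is_RInt_derive (V:=R_CompleteNormedModule) (fun s => lam ^ 2 * exp (2 * (Th T theta s - Th T theta T)))).
    - intros x _. rewrite kf_sq; auto; try lra.
      assert (Hd := Th_der T theta x ltac:(lra) Hc).
      auto_derive. exists (tht T theta x); exact Hd.
      replace (Derive (fun x0 => Th T theta x0) x) with (tht T theta x) by (symmetry; apply is_derive_unique; exact Hd). unfold Rminus. ring.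
    - intros x _. apply (continuous_ext (fun s => kf T lam theta s * kf T lam theta s)).
      intros; simpl; ring. apply cmul; apply kf_cont; auto; lra. }
  simpl in HH. rewrite Th0 in HH. unfold minus, plus, opp in HH; simpl in HH.
  replace (2 * (Th T theta T - Th T theta T)) with 0 in HH by ring. rewrite exp_0 in HH.
  replace (lam ^ 2 * (1 - exp (-2 * Th T theta T))) with (lam ^ 2 * 1 + - (lam ^ 2 * exp (2 * (0 - Th T theta T)))).
  exact HH. replace (2 * (0 - Th T theta T)) with (-2 * Th T theta T) by ring. ring.
Qed.

Lemma der_eq (f : R -> R) x l l' : is_derive f x l -> l = l' -> is_derive f x l'.
Proof. intros; subst; auto. Qed.
Lemma der_mult (f g : R -> R) x df dg : is_derive f x df -> is_derive g x dg ->
  is_derive (fun t => f t * g t) x (df * g x + f x * dg).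
Proof. intros. apply (is_derive_mult f g x df dg H H0). intros; apply Rmult_comm. Qed.
Lemma der_minus (f g : R -> R) x df dg : is_derive f x df -> is_derive g x dg ->
  is_derive (fun t => f t - g t) x (df - dg).
Proof. intros. apply (is_derive_minus f g x df dg H H0). Qed.
Lemma der_plus (f g : R -> R) x df dg : is_derive f x df -> is_derive g x dg ->
  is_derive (fun t => f t + g t) x (df + dg).
Proof. intros. apply (is_derive_plus f g x df dg H H0). Qed.
Lemma der_const (c x : R) : is_derive (fun _ => c) x 0.
Proof. apply (is_derive_const c x). Qed.
Lemma der_exp (f : R -> R) x df : is_derive f x df -> is_derive (fun t => exp (f t)) x (df * exp (f x)).
Proof. intros. apply (is_derive_comp exp f x (exp (f x)) df). apply is_derive_exp. auto. Qed.

Lemma cont_of_der (f : R -> R) x l : is_derive f x l -> continuous f x.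
Proof. intros. apply (ex_derive_continuous (K:=R_AbsRing) (V:=R_NormedModule)). exists l; auto. Qed.

Lemma state_term d T lam theta x0 xT v y i :
  0 < T -> cont_on theta 0 T -> (forall t, 0 <= t <= T -> 0 < theta t) ->
  admissible d T v -> is_state d T lam theta x0 xT v y -> (i < d)%nat ->
  y T i - xT i = exp (- Th T theta T) * (x0 i - xT i)
     + RInt (fun s => kf T lam theta s * v (clamp T s) i) 0 T.
Proof.
  intros HT Hc Hp Hv Hy Hi.
  destruct (Hy i Hi) as [Hy0 [Hyc Hyd]].
  assert (Hvc : forall s, continuous (fun t => v (clamp T t) i) s).
  { intros; apply (cont_clamp (fun t => v t i)); [lra | apply Hv; auto]. }
  assert (Hkv : forall s, continuous (fun s => kf T lam theta s * v (clamp T s) i) s).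
  { intros; apply cmul; [apply kf_cont; auto; lra | apply Hvc]. }
  set (F := fun t => RInt (fun s => kf T lam theta s * v (clamp T s) i) 0 t).
  set (h := fun t => exp (Th T theta t - Th T theta T) * (y (clamp T t) i - xT i) - F t).
  assert (D : forall x, Rmin 0 T < x < Rmax 0 T -> is_derive h x 0).
  { intros x Hx. rewrite Rmin_left, Rmax_right in Hx by lra.
    assert (Hyx : is_derive (fun s => y (clamp T s) i) x
       (theta x * (xT i - y x i) + gfun lam theta x * v x i)).
    { apply (is_derive_ext_loc (fun s => y s i)); [|apply Hyd; auto].
      assert (He : 0 < Rmin x (T - x)) by (apply Rmin_glb_lt; lra).
      exists (mkposreal _ He). intros t Ht.
      unfold ball in Ht; simpl in Ht; unfold AbsRing_ball, abs, minus, plus, opp in Ht; simpl in Ht.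
      assert (Rmin x (T - x) <= x) by apply Rmin_l. assert (Rmin x (T - x) <= T - x) by apply Rmin_r.
      rewrite clamp_id; auto. unfold Rabs in Ht; destruct Rcase_abs in Ht; lra. }
    assert (HF : is_derive F x (kf T lam theta x * v (clamp T x) i)).
    { unfold F. apply (RInt_deriv (fun s => kf T lam theta s * v (clamp T s) i)). exact Hkv. }
    assert (HTh := Th_der T theta x ltac:(lra) Hc).
    eapply der_eq.
    { unfold h. apply der_minus. apply der_mult. apply der_exp. apply der_minus. exact HTh.
      apply der_const. apply der_minus. exact Hyx. apply der_const. exact HF. }
    cbv beta. unfold kf, gt, gfun, tht. rewrite !(clamp_id T x) by lra.
    match goal with |- ?a = ?b => change (@eq R a b) end. ring. }
  assert (C : forall x, Rmin 0 T <= x <= Rmax 0 T -> continuity_pt h x).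
  { intros x Hx. apply continuity_pt_filterlim. unfold h.
    apply (cminus (fun t => exp (Th T theta t - Th T theta T) * (y (clamp T t) i - xT i)) F).
    apply cmul. apply (cexp (fun t => Th T theta t - Th T theta T)).
    apply cminus. apply Th_cont; auto; lra. apply cconst.
    apply cminus. apply (cont_clamp (fun t => y t i)). lra. exact Hyc. apply cconst.
    eapply cont_of_der. apply (RInt_deriv (fun s => kf T lam theta s * v (clamp T s) i)). exact Hkv. }
  destruct (MVT_gen h 0 T (fun _ => 0) D C) as [c [_ Hm]].
  unfold h, F in Hm. replace (RInt (fun s => kf T lam theta s * v (clamp T s) i) 0 0) with 0 in Hm by (rewrite RInt_point; reflexivity). rewrite Th0 in Hm.
  rewrite (clamp_id T T), (clamp_id T 0) in Hm by lra. rewrite Hy0 in Hm.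
  replace (Th T theta T - Th T theta T) with 0 in Hm by ring. rewrite exp_0 in Hm.
  replace (0 - Th T theta T) with (- Th T theta T) in Hm by ring.
  unfold F. lra.
Qed.

Definition S (l : list nat) (f : nat -> R) := fold_right Rplus 0 (map f l).

Lemma S_ext l f g : (forall i, In i l -> f i = g i) -> S l f = S l g.
Proof. induction l; simpl; intros; auto. unfold S in *; simpl. rewrite H, IHl; auto. Qed.
Lemma S_plus l f g : S l (fun i => f i + g i) = S l f + S l g.
Proof. induction l; unfold S in *; simpl; [ring|]. rewrite IHl; ring. Qed.
Lemma S_scal l c f : S l (fun i => c * f i) = c * S l f.
Proof. induction l; unfold S in *; simpl; [ring|]. rewrite IHl; ring. Qed.
Lemma S_le l f g : (forall i, In i l -> f i <= g i) -> S l f <= S l g.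
Proof. induction l; unfold S in *; simpl; intros; [lra|]. apply Rplus_le_compat; auto. Qed.
Lemma S_ge0 l f : (forall i, In i l -> 0 <= f i) -> 0 <= S l f.
Proof. induction l; unfold S in *; simpl; intros; [lra|]. apply Rplus_le_le_0_compat; auto. Qed.
Lemma S_zero l f : (forall i, In i l -> 0 <= f i) -> S l f <= 0 -> forall i, In i l -> f i = 0.
Proof.
  induction l; simpl; intros H H0 i Hi; [contradiction|].
  unfold S in H0; simpl in H0. fold (S l f) in H0.
  assert (0 <= f a) by auto. assert (0 <= S l f) by (apply S_ge0; auto).
  destruct Hi; [subst; lra|]. apply IHl; auto; lra.
Qed.

Lemma RInt_cmul (f : R -> R) c a b : ex_RInt f a b -> RInt (fun s => c * f s) a b = c * RInt f a b.
Proof.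
  intros. apply is_RInt_unique. apply (is_RInt_scal (V:=R_NormedModule) f a b c).
  apply (RInt_correct (V:=R_CompleteNormedModule)); auto.
Qed.

Lemma cpow2 (f : R -> R) x : continuous f x -> continuous (fun s => f s ^ 2) x.
Proof. intros. apply (continuous_ext (fun s => f s * f s)). intros; simpl; ring. apply cmul; auto. Qed.

Lemma quad_ineq (f k : R -> R) T c : 0 <= T -> (forall s, continuous f s) -> (forall s, continuous k s) ->
  0 <= RInt (fun s => f s ^ 2) 0 T + 2 * c * RInt (fun s => k s * f s) 0 T + c ^ 2 * RInt (fun s => k s ^ 2) 0 T.
Proof.
  intros HT Hf Hk.
  assert (E1 : ex_RInt (fun s => f s ^ 2) 0 T) by (apply ex_RInt_c; intros; apply cpow2; auto).
  assert (E2 : ex_RInt (fun s => k s * f s) 0 T) by (apply ex_RInt_c; intros; apply cmul; auto).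
  assert (E3 : ex_RInt (fun s => k s ^ 2) 0 T) by (apply ex_RInt_c; intros; apply cpow2; auto).
  assert (H : is_RInt (fun s => f s ^ 2 + (2 * c * (k s * f s) + c ^ 2 * k s ^ 2)) 0 T
     (RInt (fun s => f s ^ 2) 0 T + (2 * c * RInt (fun s => k s * f s) 0 T + c ^ 2 * RInt (fun s => k s ^ 2) 0 T))).
  { apply (is_RInt_plus (V:=R_NormedModule)). apply (RInt_correct (V:=R_CompleteNormedModule)); auto.
    apply (is_RInt_plus (V:=R_NormedModule)).
    apply (is_RInt_scal (V:=R_NormedModule) (fun s => k s * f s)). apply (RInt_correct (V:=R_CompleteNormedModule)); auto.
    apply (is_RInt_scal (V:=R_NormedModule) (fun s => k s ^ 2)). apply (RInt_correct (V:=R_CompleteNormedModule)); auto. }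
  rewrite Rplus_assoc. rewrite <- (is_RInt_unique _ _ _ _ H).
  apply RInt_ge_0; auto. eexists; exact H.
  intros. replace (f x ^ 2 + (2 * c * (k x * f x) + c ^ 2 * k x ^ 2)) with ((f x + c * k x) ^ 2) by ring.
  apply pow2_ge_0.
Qed.

Lemma cost_eq d T gam xT (v : R -> vec) y : 0 < T -> admissible d T v ->
  cost d T gam xT v y = / 2 * S (seq 0 d) (fun i => RInt (fun s => v (clamp T s) i ^ 2) 0 T)
     + gam / 2 * S (seq 0 d) (fun i => (y T i - xT i) ^ 2).
Proof.
  intros HT Hv. unfold cost. f_equal.
  rewrite (RInt_ext _ (fun t => / 2 * sqnorm d (v (clamp T t)))).
  2:{ intros x Hx. rewrite Rmin_left, Rmax_right in Hx by lra. rewrite clamp_id by lra. reflexivity. }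
  apply is_RInt_unique. apply (is_RInt_scal (V:=R_NormedModule) (fun t => sqnorm d (v (clamp T t))) 0 T (/2)).
  apply (is_RInt_sum (seq 0 d) (fun i s => v (clamp T s) i ^ 2)).
  intros i Hi. apply in_seq in Hi. apply ex_RInt_c. intros. apply cpow2.
  apply (cont_clamp (fun t => v t i)). lra. apply Hv. lia.
Qed.

Definition Pc T (v : R -> vec) i := RInt (fun s => v (clamp T s) i ^ 2) 0 T.
Definition Qc T lam theta (v : R -> vec) i := RInt (fun s => kf T lam theta s * v (clamp T s) i) 0 T.

Lemma cost_PQ d T lam gam theta x0 xT v y :
  0 < T -> cont_on theta 0 T -> (forall t, 0 <= t <= T -> 0 < theta t) ->
  admissible d T v -> is_state d T lam theta x0 xT v y ->
  cost d T gam xT v y = S (seq 0 d) (fun i => / 2 * Pc T v i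
      + gam / 2 * (exp (- Th T theta T) * (x0 i - xT i) + Qc T lam theta v i) ^ 2).
Proof.
  intros HT Hc Hp Hv Hy. rewrite cost_eq by auto.
  rewrite S_plus, S_scal, S_scal. f_equal. f_equal.
  apply S_ext. intros i Hi. apply in_seq in Hi.
  rewrite (state_term d T lam theta x0 xT v y i); auto. lia.
Qed.

Lemma lower d T lam gam theta x0 xT v y (Y : nat -> R) :
  0 < T -> cont_on theta 0 T -> (forall t, 0 <= t <= T -> 0 < theta t) ->
  admissible d T v -> is_state d T lam theta x0 xT v y ->
  (forall i, exp (- Th T theta T) * (x0 i - xT i) = Y i * (1 + gam * RInt (fun s => kf T lam theta s ^ 2) 0 T)) ->
  S (seq 0 d) (fun i => (/ 2 * gam ^ 2 * Y i ^ 2 * RInt (fun s => kf T lam theta s ^ 2) 0 T + gam / 2 * Y i ^ 2)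
     + gam / 2 * (Qc T lam theta v i + gam * Y i * RInt (fun s => kf T lam theta s ^ 2) 0 T) ^ 2)
  <= cost d T gam xT v y.
Proof.
  intros HT Hc Hp Hv Hy HY. rewrite (cost_PQ d T lam gam theta x0 xT v y) by auto.
  apply S_le. intros i Hi. apply in_seq in Hi. rewrite HY.
  assert (Hq := quad_ineq (fun s => v (clamp T s) i) (kf T lam theta) T (gam * Y i) ltac:(lra)
     ltac:(intros; apply (cont_clamp (fun t => v t i)); [lra | apply Hv; lia])
     ltac:(intros; apply kf_cont; auto; lra)).
  unfold Pc, Qc. set (K := RInt (fun s => kf T lam theta s ^ 2) 0 T) in *.
  set (P := RInt (fun s => v (clamp T s) i ^ 2) 0 T) in *.
  set (Q := RInt (fun s => kf T lam theta s * v (clamp T s) i) 0 T) in *.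
  assert (/ 2 * P + gam / 2 * (Y i * (1 + gam * K) + Q) ^ 2 -
     ((/ 2 * gam ^ 2 * Y i ^ 2 * K + gam / 2 * Y i ^ 2) + gam / 2 * (Q + gam * Y i * K) ^ 2)
     = / 2 * (P + 2 * (gam * Y i) * Q + (gam * Y i) ^ 2 * K)) by field.
  lra.
Qed.

Theorem proposition4p5 (d : nat) (T lam gam : R) (theta : R -> R) (x0 xT : vec) :
  0 < T -> 0 < lam -> 0 < gam ->
  (forall t, 0 <= t <= T -> 0 < theta t) ->
  cont_on theta 0 T ->
  let thb := RInt theta 0 T in
  (exists u x, optimal d T lam gam theta x0 xT u x) /\
  (forall u x, optimal d T lam gam theta x0 xT u x ->
     sqnorm d (vsub (x T) xT) =
       exp (-2 * thb) / (1 + gam * lam ^ 2 * (1 - exp (-2 * thb))) ^ 2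
       * sqnorm d (vsub xT x0)).
Proof.
  intros HT Hl Hg Hp Hc thb.
  assert (Hthb : thb = Th T theta T).
  { unfold thb, Th. apply RInt_ext. intros x Hx. rewrite Rmin_left, Rmax_right in Hx by lra.
    unfold tht. rewrite clamp_id by lra. reflexivity. }
  set (E := exp (- Th T theta T)).
  set (K := RInt (fun s => kf T lam theta s ^ 2) 0 T).
  assert (HK0 : 0 <= K).
  { apply RInt_ge_0. lra. apply ex_RInt_c. intros; apply cpow2, kf_cont; auto; lra.
    intros; apply pow2_ge_0. }
  assert (HKv : K = lam ^ 2 * (1 - exp (-2 * Th T theta T))) by (apply K_val; auto).
  assert (H1K : 1 + gam * K <> 0) by nra.
  set (Y := fun i => E * (x0 i - xT i) / (1 + gam * K)).
  assert (HY : forall i, E * (x0 i - xT i) = Y i * (1 + gam * K)).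
  { intros; unfold Y; field; auto. }
  set (us := fun t (i : nat) => - gam * Y i * kf T lam theta t).
  assert (Hkc : forall s, continuous (kf T lam theta) s) by (intros; apply kf_cont; auto; lra).
  assert (Husc : forall i s, continuous (fun t => kf T lam theta t * us t i) s).
  { intros; unfold us. apply cmul; auto. apply cmul; auto. apply cconst. }
  set (xs := fun t (i : nat) => xT i + exp (Th T theta T - Th T theta t) *
        (E * (x0 i - xT i) + RInt (fun s => kf T lam theta s * us s i) 0 t)).
  assert (Hadm : admissible d T us).
  { intros i _ t _. apply cont_within. unfold us. apply cmul; auto. apply cconst. }
  assert (Hst : is_state d T lam theta x0 xT us xs).
  { intros i _. split; [|split].
    - unfold xs. rewrite Th0. rewrite RInt_point. change (@zero R_CompleteNormedModule) with 0.
      unfold E. replace (exp (Th T theta T - 0)) with (/ exp (- Th T theta T)).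
      field. apply Rgt_not_eq, exp_pos.
      rewrite <- exp_Ropp. f_equal. ring.
    - intros t _. apply cont_within. unfold xs.
      apply cplus. apply cconst. apply cmul. apply (cexp (fun t => Th T theta T - Th T theta t)).
      apply cminus. apply cconst. apply Th_cont; auto; lra.
      apply cplus. apply cconst. eapply cont_of_der.
      apply (RInt_deriv (fun s => kf T lam theta s * us s i)). auto.
    - intros t Ht.
      assert (HTh := Th_der T theta t ltac:(lra) Hc).
      assert (HF := RInt_deriv (fun s => kf T lam theta s * us s i) t (Husc i)).
      eapply der_eq.
      { unfold xs. apply der_plus. apply der_const. apply der_mult. apply der_exp. apply der_minus.
        apply der_const. exact HTh. apply der_plus. apply der_const. exact HF. }
      cbv beta. unfold xs. set (Fi := RInt (fun s => kf T lam theta s * us s i) 0 t).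
      unfold us, kf, gt, gfun, tht. rewrite !(clamp_id T t) by lra.
      replace (exp (Th T theta t - Th T theta T)) with (/ exp (Th T theta T - Th T theta t))
        by (rewrite <- exp_Ropp; f_equal; ring).
      match goal with |- ?a = ?b => change (@eq R a b) end.
      field. apply Rgt_not_eq, exp_pos. }
  assert (HPs : forall i, Pc T us i = gam ^ 2 * Y i ^ 2 * K).
  { intros i. unfold Pc. rewrite (RInt_ext _ (fun s => (gam ^ 2 * Y i ^ 2) * kf T lam theta s ^ 2)).
    apply RInt_cmul. apply ex_RInt_c. intros; apply cpow2; auto.
    intros x Hx. rewrite Rmin_left, Rmax_right in Hx by lra. rewrite clamp_id by lra. unfold us. match goal with |- ?a = ?b => change (@eq R a b) end. ring. }
  assert (HQs : forall i, Qc T lam theta us i = - gam * Y i * K).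
  { intros i. unfold Qc. rewrite (RInt_ext _ (fun s => (- gam * Y i) * kf T lam theta s ^ 2)).
    apply RInt_cmul. apply ex_RInt_c. intros; apply cpow2; auto.
    intros x Hx. rewrite Rmin_left, Rmax_right in Hx by lra. rewrite clamp_id by lra. unfold us. match goal with |- ?a = ?b => change (@eq R a b) end. ring. }
  assert (Hcs : cost d T gam xT us xs = S (seq 0 d) (fun i => / 2 * gam ^ 2 * Y i ^ 2 * K + gam / 2 * Y i ^ 2)).
  { rewrite (cost_PQ d T lam gam theta x0 xT us xs) by auto. apply S_ext. intros i _.
    fold E. rewrite HPs, HQs, HY. ring. }
  assert (Hlow : forall v y, admissible d T v -> is_state d T lam theta x0 xT v y ->
     cost d T gam xT us xs + S (seq 0 d) (fun i => gam / 2 * (Qc T lam theta v i + gam * Y i * K) ^ 2)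
     <= cost d T gam xT v y).
  { intros v y Hv Hy. rewrite Hcs, <- S_plus. apply (lower d T lam gam theta x0 xT v y Y); auto. }
  split.
  - exists us, xs. split; [exact Hadm | split; [exact Hst|]].
    intros v y Hv Hy. specialize (Hlow v y Hv Hy).
    assert (0 <= S (seq 0 d) (fun i => gam / 2 * (Qc T lam theta v i + gam * Y i * K) ^ 2)).
    { apply S_ge0. intros. assert (0 <= (Qc T lam theta v i + gam * Y i * K) ^ 2) by apply pow2_ge_0. nra. }
    lra.
  - intros u x [Hu [Hx Hopt]]. specialize (Hopt us xs Hadm Hst). specialize (Hlow u x Hu Hx).
    assert (Z := S_zero (seq 0 d) (fun i => gam / 2 * (Qc T lam theta u i + gam * Y i * K) ^ 2)
       ltac:(intros; assert (0 <= (Qc T lam theta u i + gam * Y i * K) ^ 2) by apply pow2_ge_0; nra)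
       ltac:(lra)).
    unfold sqnorm. fold (S (seq 0 d) (fun i => vsub (x T) xT i ^ 2)).
    fold (S (seq 0 d) (fun i => vsub xT x0 i ^ 2)). rewrite <- S_scal. apply S_ext.
    intros i Hi. specialize (Z i Hi). simpl in Z.
    assert (HQ : Qc T lam theta u i = - gam * Y i * K).
    { assert ((Qc T lam theta u i + gam * Y i * K) ^ 2 = 0) by nra.
      simpl in H. rewrite Rmult_1_r in H. apply Rmult_integral in H. lra. }
    apply in_seq in Hi. unfold vsub.
    rewrite (state_term d T lam theta x0 xT u x i) by (auto; lia). fold E.
    unfold Qc in HQ. rewrite HQ. rewrite Hthb. replace (gam * lam ^ 2 * (1 - exp (-2 * Th T theta T))) with (gam * K) by (rewrite HKv; ring).
    replace (exp (-2 * Th T theta T)) with (E * E) by (unfold E; rewrite <- exp_plus; f_equal; ring).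
    unfold Y. field. auto.
Qed.
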